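(* Fix $\lambda>0$ and let $P_n = e^{-\lambda}\lambda^n/n!$. Let $\mathbb P$ be the set of compactly supported Borel probability measures on $\mathbb R$, equipped with the topology in which $\rho_n\to\rho$ iff $\int\phi\,d\rho_n\to\int\phi\,d\rho$ for every continuous compactly supported $\phi\colon\mathbb R\to\mathbb R$. For $k\geqslant 1$ let $h_k\colon\mathbb R\to\mathbb R$, $y\mapsto y/k$, and let $(h_k)_\star$ denote pushforward of measures. For $x\in\mathbb R$ define $\Sigma_x,\Sigma\colon\mathbb P\to\mathbb P$ by $$\Sigma_x(\rho) = \sum_{n=0}^\infty P_n\,(h_{n+1})_\star\big(\delta_x * \rho^{*n}\big),\qquad \Sigma(\rho) = \sum_{n=0}^\infty P_n\,(h_{n+1})_\star\big(\rho^{*(n+1)}\big),$$ where $*$ is convolution of measures, $\rho^{*n}$ the $n$-th convolution power and $\rho^{*0}=\delta_0$. Then for every $x\in\mathbb R$ the operators $\Sigma_x$ and $\Sigma$ are continuous on $\mathbb P$.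
   Context: $\delta_a$ is the Dirac measure at $a$; the series define measures via $\int\phi\,d\Sigma_x(\rho) = \sum_n P_n\int \phi(y/(n+1))\,d(\delta_x*\rho^{*n})(y)$, and similarly for $\Sigma$. *)

(* Defs.v *)
From HB Require Import structures.
From mathcomp Require Import all_boot all_order all_algebra.
From mathcomp Require Import all_classical all_reals all_analysis.
Set Implicit Arguments. Unset Strict Implicit. Unset Printing Implicit Defensive.
Import Order.TTheory GRing.Theory Num.Theory.
Import numFieldNormedType.Exports.
Local Open Scope classical_set_scope.
Local Open Scope ring_scope.

Section defs.
Variable R : realType.
Local Open Scope ereal_scope.

Definition poissonP (lam : R) (n : nat) : R :=
  (expR (- lam) * lam ^+ n / (n`!)%:R)%R.

Definition hdiv (k : nat) (y : R) : R := (y / k%:R)%R.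

Definition mconv (m1 m2 : set R -> \bar R) : set R -> \bar R :=
  pushforward (m1 \x m2) (fun p : R * R => (p.1 + p.2)%R).

Fixpoint convpow (rho : set R -> \bar R) (n : nat) : set R -> \bar R :=
  match n with
  | 0%N => @dirac _ R 0%R R
  | n'.+1 => mconv (convpow rho n') rho
  end.

Definition SigmaX (lam x : R) (rho : set R -> \bar R) : set R -> \bar R :=
  fun A => \sum_(0 <= n <oo)
    ((poissonP lam n)%:E * pushforward (mconv (@dirac _ R x R) (convpow rho n)) (hdiv n.+1) A).

Definition Sigma (lam : R) (rho : set R -> \bar R) : set R -> \bar R :=
  fun A => \sum_(0 <= n <oo)
    ((poissonP lam n)%:E * pushforward (convpow rho n.+1) (hdiv n.+1) A).

Definition compactly_supported (mu : set R -> \bar R) : Prop :=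
  exists M : R, mu (~` `[(- M)%R, M]) = 0.

Definition test_fun (phi : R -> R) : Prop :=
  continuous phi /\ exists M : R, forall y, (M < `|y|)%R -> phi y = 0%R.

Definition vague_cvg (mu_ : nat -> set R -> \bar R) (mu : set R -> \bar R) : Prop :=
  forall phi, test_fun phi ->
    (fun k => \int[mu_ k]_y (phi y)%:E) @ \oo --> \int[mu]_y (phi y)%:E.

Definition inP (mu : probability R R) : Prop := compactly_supported mu.

(* continuity of an operator F on P (sequential, via the defining convergence) *)
Definition continuous_on_P (F : (set R -> \bar R) -> (set R -> \bar R)) : Prop :=
  forall (rho_ : nat -> probability R R) (rho : probability R R),
    (forall k, inP (rho_ k)) -> inP rho ->
    vague_cvg (fun k => rho_ k : set R -> \bar R) rho ->
    vague_cvg (fun k => F (rho_ k)) (F rho).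

End defs.

(* Main.v *)
Require Import Defs.
From HB Require Import structures.
From mathcomp Require Import all_boot all_order all_algebra.
From mathcomp Require Import all_classical all_reals all_analysis.
From mathcomp Require Import measurable_realfun.
From mathcomp Require Import ring lra.
Import Order.TTheory GRing.Theory Num.Theory.
Import numFieldNormedType.Exports.
Set Implicit Arguments. Unset Strict Implicit. Unset Printing Implicit Defensive.
Local Open Scope classical_set_scope.
Local Open Scope ring_scope.

Section Eexp.
Context (R : realType) d (T : measurableType d) (mu : probability T R).

Definition Ex (f : T -> R) : R := fine (\int[mu]_x (f x)%:E).

Lemma int_cstP (c : R) : (\int[mu]_x (cst c x)%:E = c%:E)%E.
Proof.
have -> : (fun x => (cst c x)%:E) = cst c%:E by [].
by rewrite integral_cst// -[X in (_ * X)%E]/(mu setT) probability_setT mule1.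
Qed.

Lemma int_fin (f : T -> R) C : measurable_fun setT f ->
  (forall x, 0 <= f x <= C) ->
  (\int[mu]_x (f x)%:E = (Ex f)%:E)%E /\ 0 <= Ex f <= C.
Proof.
move=> mf fb.
have i0 : (0 <= \int[mu]_x (f x)%:E)%E.
  by apply: integral_ge0 => x _; rewrite lee_fin; case/andP: (fb x).
have iC : (\int[mu]_x (f x)%:E <= C%:E)%E.
  rewrite -(int_cstP C); apply: ge0_le_integral => //.
  all: try (by move=> x _; rewrite lee_fin; case/andP: (fb x)).
  all: try (exact/measurable_EFinP).
have fin : (\int[mu]_x (f x)%:E)%E \is a fin_num.
  by rewrite ge0_fin_numE// (le_lt_trans iC)// ltry.
split; first by rewrite /Ex fineK.
by rewrite /Ex -!lee_fin fineK// i0 iC.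
Qed.

Lemma Ex_ge0 (f : T -> R) C : measurable_fun setT f -> (forall x, 0 <= f x <= C) -> 0 <= Ex f.
Proof. by move=> mf fb; case/andP: (int_fin mf fb).2. Qed.

Lemma Ex_leC (f : T -> R) C : measurable_fun setT f -> (forall x, 0 <= f x <= C) -> Ex f <= C.
Proof. by move=> mf fb; case/andP: (int_fin mf fb).2. Qed.

Lemma Ex_cst c : Ex (fun _ => c) = c.
Proof. by rewrite /Ex -/(cst c) (int_cstP c). Qed.

Lemma Ex_le (f g : T -> R) C D : measurable_fun setT f -> measurable_fun setT g ->
  (forall x, 0 <= f x <= C) -> (forall x, 0 <= g x <= D) ->
  (forall x, f x <= g x) -> Ex f <= Ex g.
Proof.
move=> mf mg fb gb fg.
rewrite -lee_fin -(int_fin mf fb).1 -(int_fin mg gb).1.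
apply: ge0_le_integral => //.
- by move=> x _; rewrite lee_fin; case/andP: (fb x).
- exact/measurable_EFinP.
- exact/measurable_EFinP.
- by move=> x _; rewrite lee_fin.
Qed.

Lemma Ex_add (f g : T -> R) C D : measurable_fun setT f -> measurable_fun setT g ->
  (forall x, 0 <= f x <= C) -> (forall x, 0 <= g x <= D) ->
  Ex (fun x => f x + g x) = Ex f + Ex g.
Proof.
move=> mf mg fb gb.
have fgb : forall x, 0 <= f x + g x <= C + D.
  move=> x; case/andP: (fb x) => f0 fC; case/andP: (gb x) => g0 gD.
  by rewrite addr_ge0// lerD.
have mfg : measurable_fun setT (fun x => f x + g x) by exact: measurable_funD.
apply: EFin_inj; rewrite -(int_fin mfg fgb).1 EFinD -(int_fin mf fb).1 -(int_fin mg gb).1.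
under eq_integral do rewrite EFinD.
apply: ge0_integralD => //.
- by move=> x _; rewrite lee_fin; case/andP: (fb x).
- exact/measurable_EFinP.
- by move=> x _; rewrite lee_fin; case/andP: (gb x).
- exact/measurable_EFinP.
Qed.

Lemma Ex_scale (f : T -> R) C c : measurable_fun setT f -> (forall x, 0 <= f x <= C) -> 0 <= c ->
  Ex (fun x => c * f x) = c * Ex f.
Proof.
move=> mf fb c0.
have cfb : forall x, 0 <= c * f x <= c * C.
  by move=> x; case/andP: (fb x) => f0 fC; rewrite mulr_ge0// ler_wpM2l.
have mcf : measurable_fun setT (fun x => c * f x) by exact: measurable_funM.
apply: EFin_inj; rewrite -(int_fin mcf cfb).1 EFinM -(int_fin mf fb).1.
under eq_integral do rewrite EFinM.
apply: ge0_integralZl => //.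
- exact/measurable_EFinP.
- by move=> x _; rewrite lee_fin; case/andP: (fb x).
Qed.

Lemma Ex_dist (f g h : T -> R) Cf Cg Ch :
  measurable_fun setT f -> measurable_fun setT g -> measurable_fun setT h ->
  (forall x, 0 <= f x <= Cf) -> (forall x, 0 <= g x <= Cg) -> (forall x, 0 <= h x <= Ch) ->
  (forall x, `|f x - g x| <= h x) -> `|Ex f - Ex g| <= Ex h.
Proof.
move=> mf mg mh fb gb hb fgh.
have ghb : forall x, 0 <= g x + h x <= Cg + Ch.
  move=> x; case/andP: (gb x) => g0 gC; case/andP: (hb x) => h0 hC.
  by rewrite addr_ge0// lerD.
have fhb : forall x, 0 <= f x + h x <= Cf + Ch.
  move=> x; case/andP: (fb x) => g0 gC; case/andP: (hb x) => h0 hC.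
  by rewrite addr_ge0// lerD.
have mgh : measurable_fun setT (fun x => g x + h x) by exact: measurable_funD.
have mfh : measurable_fun setT (fun x => f x + h x) by exact: measurable_funD.
have h1 : Ex f <= Ex g + Ex h.
  rewrite -(Ex_add mg mh gb hb); apply: (Ex_le mf mgh fb ghb) => x.
  by have := fgh x; rewrite ler_norml => /andP[a b]; lra.
have h2 : Ex g <= Ex f + Ex h.
  rewrite -(Ex_add mf mh fb hb); apply: (Ex_le mg mfh gb fhb) => x.
  by have := fgh x; rewrite ler_norml => /andP[a b]; lra.
rewrite ler_norml; apply/andP; split; lra.
Qed.

End Eexp.

Section UCs.
Context (R : realType).
Definition UC (f : R -> R) := forall e, 0 < e ->
  exists2 dl, 0 < dl & forall x y, `|x - y| < dl -> `|f x - f y| < e.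

Lemma UC_cont f : UC f -> continuous f.
Proof.
move=> uf x; apply/cvgrPdist_lt => e e0.
have [dl dl0 H] := uf e e0.
near=> y; apply: H.
near: y. apply/nbhs_ballP; exists dl => // y; rewrite /ball /=.
Unshelve. all: by end_near. Qed.
Lemma test_UC (f : R -> R) M : continuous f -> (forall y, M < `|y| -> f y = 0) -> UC f.
Proof.
move=> cf fM e e0.
have e20 : 0 < e / 2 by rewrite divr_gt0.
pose K := [set` `[- (`|M| + 1), `|M| + 1]].
have cov := (compact_near_coveringP K).1 (@segment_compact _ _ _).
have := @cov R ((0:R)^'+) (fun dl x => forall y, `|x - y| < dl -> `|f x - f y| < e) _.
case.
- move=> x Kx.
  have := cf x; move/cvgrPdist_lt/(_ _ e20); case/nbhs_ballP => eta /= eta0 Heta.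
  have eta20 : 0 < eta / 2 by rewrite divr_gt0.
  near=> x' dl => y /= hy.
  have hx' : `|x - x'| < eta / 2.
    near: x'; apply/nbhs_ballP; exists (eta / 2) => // z; rewrite /ball /=.
  have hdl : dl < eta / 2 by near: dl; exact: nbhs_right_lt.
  have h1 := Heta x'; rewrite /ball /= in h1.
  have h2 := Heta y; rewrite /ball /= in h2.
  have := h1 ltac:(lra).
  have : `|x - y| < eta.
    rewrite (_ : x - y = (x - x') + (x' - y)); last by ring.
    apply: (le_lt_trans (ler_normD _ _)); lra.
  move=> /h2 hy2 hx2 /=.
  rewrite (_ : f x' - f y = (f x - f y) - (f x - f x')); last by ring.
  apply: (le_lt_trans (ler_normB _ _)); lra.
- move=> a /= a0 Ha.
  have a20 : 0 < a / 2 by rewrite divr_gt0.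
  have HK := Ha (a / 2) ltac:(rewrite /ball /= sub0r normrN gtr0_norm //; lra) a20.
  have Kin z : `|z| <= `|M| + 1 -> K z.
    by move=> hz; rewrite /K /= in_itv /= -ler_norml.
  exists (Num.min (a / 2) 1); first by rewrite lt_min a20 ltr01.
  move=> x y; rewrite lt_min => /andP[hxy _].
  have [hx|hx] := lerP `|x| (`|M| + 1).
    by apply: HK (Kin _ hx) _ _.
  have [hy|hy] := lerP `|y| (`|M| + 1).
    by rewrite distrC; apply: HK (Kin _ hy) _ _; rewrite distrC.
  have Mx : M < `|x| by apply: le_lt_trans hx; rewrite (le_trans (ler_norm M))// lerDl.
  have My : M < `|y| by apply: le_lt_trans hy; rewrite (le_trans (ler_norm M))// lerDl.
  by rewrite fM// fM// subrr normr0.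
Unshelve. all: by end_near. Qed.

Definition clamp (a : R) := Num.min 1 (Num.max 0 a).
Lemma clampL (a b : R) : `|clamp a - clamp b| <= `|a - b|.
Proof.
rewrite /clamp.
have := ler_norm (a - b); have := ler_norm (b - a); rewrite distrC => h1 h2.
rewrite ler_norml.
case: (leP 0 a) => ha; case: (leP 0 b) => hb;
rewrite ?(max_r (ltW _)) ?max_l ?max_r //;
case: (leP 1 a) => ha1; case: (leP 1 b) => hb1;
rewrite ?(min_r (ltW _)) ?min_l ?min_r ?(min_l (ltW _)) //; try lra.
Qed.

Lemma clamp_bnd a : 0 <= clamp a <= 1.
Proof.
rewrite /clamp.
case: (leP 0 a) => ha; rewrite ?(max_r (ltW _)) ?max_l ?max_r //;
case: (leP 1 a) => ha1; rewrite ?(min_r (ltW _)) ?min_l ?min_r ?(min_l (ltW _)) //;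
apply/andP; split; lra.
Qed.

Definition chi (M y : R) := clamp (M + 1 - `|y|).

Lemma chi_bnd M y : 0 <= chi M y <= 1.
Proof. exact: clamp_bnd. Qed.

Lemma chi1 M y : `|y| <= M -> chi M y = 1.
Proof.
move=> h; rewrite /chi /clamp max_r; last lra.
by rewrite min_l //; lra.
Qed.

Lemma chi0 M y : M + 1 <= `|y| -> chi M y = 0.
Proof.
move=> h; rewrite /chi /clamp max_l; last lra.
by rewrite min_r // ler01.
Qed.

Lemma chiL M y z : `|chi M y - chi M z| <= `|y - z|.
Proof.
apply: (le_trans (clampL _ _)).
rewrite (_ : M + 1 - `|y| - (M + 1 - `|z|) = `|z| - `|y|); last by ring.
by rewrite distrC ler_dist_dist.
Qed.

Lemma UC_lip f : (forall x y, `|f x - f y| <= `|x - y|) -> UC f.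
Proof. by move=> h e e0; exists e => // x y hxy; apply: le_lt_trans (h x y) hxy. Qed.

Lemma UC_chi M : UC (chi M).
Proof. exact/UC_lip/chiL. Qed.

Definition good (F : R -> R) (C : R) := (forall x, 0 <= F x <= C) /\ UC F.

Lemma good_ge0C F C : good F C -> 0 <= C.
Proof. by case=> h _; case/andP: (h 0) => h1 h2; exact: le_trans h2. Qed.

Lemma good_mul F G C D : good F C -> good G D -> good (fun x => F x * G x) (C * D).
Proof.
move=> [Fb uF] [Gb uG]; split.
  move=> x; case/andP: (Fb x) => F0 FC; case/andP: (Gb x) => G0 GD.
  by rewrite mulr_ge0 //= ler_pM.
have C0 : 0 <= C by case/andP: (Fb 0) => h1 h2; exact: le_trans h2.
have D0 : 0 <= D by case/andP: (Gb 0) => h1 h2; exact: le_trans h2.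
move=> e e0.
have e1 : 0 < e / (2 * (C + D + 1)) by rewrite divr_gt0 //; lra.
have [d1 d10 H1] := uF _ e1; have [d2 d20 H2] := uG _ e1.
exists (Num.min d1 d2); first by rewrite lt_min d10 d20.
move=> x y; rewrite lt_min => /andP[hx hy].
have h1 := H1 _ _ hx; have h2 := H2 _ _ hy.
rewrite (_ : F x * G x - F y * G y = F x * (G x - G y) + G y * (F x - F y)); last by ring.
apply: (le_lt_trans (ler_normD _ _)); rewrite !normrM.
case/andP: (Fb x) => F0 FC; case/andP: (Gb y) => G0 GD.
rewrite (ger0_norm F0) (ger0_norm G0).
have k : e / (2 * (C + D + 1)) * (C + D + 1) = e / 2.
  by field; lra.
have p1 : F x * `|G x - G y| <= C * (e / (2 * (C + D + 1))).
  by apply: ler_pM => //; exact: ltW.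
have p2 : G y * `|F x - F y| <= D * (e / (2 * (C + D + 1))).
  by apply: ler_pM => //; exact: ltW.
have : C * (e / (2 * (C + D + 1))) + D * (e / (2 * (C + D + 1))) <= e / 2.
  rewrite -k -mulrDl mulrC ler_wpM2l //; [exact: ltW | lra].
lra.
Qed.

Lemma good_lin F C (a b : R) : good F C -> `|a| <= 1 -> good (fun y => F (a * y + b)) C.
Proof.
move=> [Fb uF] ha; split => [x|e e0]; first exact: Fb.
have [dl dl0 H] := uF e e0; exists dl => // x y hxy; apply: H.
rewrite (_ : a * x + b - (a * y + b) = a * (x - y)); last by ring.
rewrite normrM; apply: le_lt_trans hxy.
by rewrite -[leRHS]mul1r ler_wpM2r.
Qed.

Lemma test_bounded (f : R -> R) M : continuous f -> (forall y, M < `|y| -> f y = 0) ->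
  exists C, forall y, `|f y| <= C.
Proof.
move=> cf fM.
have ab : - `|M| <= `|M| by rewrite ge0_cp.
have cn : continuous (fun y => `|f y|).
  by move=> x; apply: continuous_comp; [exact: cf | exact: norm_continuous].
have [c _ Hc] := EVT_max ab (continuous_subspaceT cn).
exists `|f c| => y.
have [hy|hy] := lerP `|y| `|M|.
  by apply: Hc; rewrite in_itv /= -ler_norml.
by rewrite fM ?normr0 // (le_lt_trans (ler_norm M)).
Qed.

Definition posp (f : R -> R) y := Num.max (f y) 0.

Lemma UC_posp f : UC f -> UC (posp f).
Proof.
move=> uf e e0; have [dl dl0 H] := uf e e0; exists dl => // x y /H.
apply: le_lt_trans; rewrite /posp.
have := ler_norm (f x - f y); have := ler_norm (f y - f x); rewrite distrC => h1 h2.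
rewrite ler_norml.
case: (leP 0 (f x)) => ha; case: (leP 0 (f y)) => hb;
rewrite ?(max_r (ltW _)) ?max_l ?max_r //; lra.
Qed.

Lemma good_posp f M : continuous f -> (forall y, M < `|y| -> f y = 0) ->
  exists C, good (posp f) C.
Proof.
move=> cf fM; have [C HC] := test_bounded cf fM.
exists C; split; last exact/UC_posp/(test_UC cf fM).
move=> x; rewrite /posp.
have := HC x; have := ler_norm (f x); have := normr_ge0 (f x).
case: (leP 0 (f x)) => ha; rewrite ?(max_r (ltW _)) ?max_l ?max_r //;
move=> *; apply/andP; split; lra.
Qed.

End UCs.

Section Conv.
Context (R : realType).

Definition addf (p : R * R) : R := p.1 + p.2.

Lemma measurable_addf : measurable_fun setT addf.
Proof. by apply: measurable_funD; [exact: measurable_fst | exact: measurable_snd]. Qed.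

HB.instance Definition _ := isMeasurableFun.Build _ _ _ _ addf measurable_addf.

Definition conv (mu rho : probability R R) : probability R R :=
  distribution (mu \x rho)%E addf.

Fixpoint cpow (rho : probability R R) (n : nat) : probability R R :=
  match n with
  | 0%N => @dirac _ R 0%R R
  | n'.+1 => conv (cpow rho n') rho
  end.

Lemma integral_conv (mu rho : probability R R) (F : R -> R) C :
  measurable_fun setT F -> (forall x, 0 <= F x <= C) ->
  Ex (conv mu rho) F = Ex mu (fun y => Ex rho (fun z => F (y + z))).
Proof.
move=> mF Fb.
pose f := fun p : R * R => (F (p.1 + p.2))%:E.
have mf : measurable_fun setT f.
  apply/measurable_EFinP; apply: measurableT_comp => //; exact: measurable_addf.
have f0 : forall p, (0 <= f p)%E by move=> p; rewrite lee_fin; case/andP: (Fb (p.1 + p.2)).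
have mFy (y : R) : measurable_fun setT (fun z => F (y + z)).
  by apply: measurableT_comp => //; apply: measurable_funD.
have Fyb (y : R) : forall z, 0 <= F (y + z) <= C by move=> z; exact: Fb.
pose G := fun y => Ex rho (fun z => F (y + z)).
have FG : fubini_F rho f = EFin \o G.
  by apply/funext => y; rewrite /fubini_F /f /= (int_fin _ (mFy y) (Fyb y)).1.
have mG : measurable_fun setT G.
  apply/measurable_EFinP; rewrite -FG.
  exact: measurable_fun_fubini_tonelli_F.
have Gb : forall y, 0 <= G y <= C.
  by move=> y; exact: (int_fin _ (mFy y) (Fyb y)).2.
apply: EFin_inj; rewrite -(int_fin _ mF Fb).1 -(int_fin _ mG Gb).1.
rewrite /conv /distribution ge0_integral_pushforward //; last first.
  by move=> y _; rewrite lee_fin; case/andP: (Fb y).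
  exact/measurable_EFinP.
rewrite preimage_setT.
rewrite (fubini_tonelli1 f mf f0).
by apply: eq_integral => y _; rewrite FG.
Qed.

End Conv.

Section WCs.
Context (R : realType).

Lemma good_meas (F : R -> R) C : good F C -> measurable_fun setT F.
Proof. by case=> _ /UC_cont cF; exact: continuous_measurable_fun. Qed.

Definition cv (u : nat -> R) (l : R) := forall e, 0 < e ->
  exists N, forall k, (N <= k)%N -> `|u k - l| < e.

Definition WC (mu_ : nat -> probability R R) (mu : probability R R) :=
  forall F C, good F C -> cv (fun k => Ex (mu_ k) F) (Ex mu F).

Lemma Ex_dirac (a : R) (F : R -> R) : measurable_fun setT F ->
  Ex (@dirac _ R a R) F = F a.
Proof.
move=> mF; rewrite /Ex integral_dirac //; last exact/measurable_EFinP.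
by rewrite diracE mem_set // mul1e.
Qed.

Lemma WC_cst mu : WC (fun _ => mu) mu.
Proof. by move=> F C _ e e0; exists 0%N => k _; rewrite subrr normr0. Qed.

Lemma good_1chi (M : R) : good (fun y => 1 - chi M y) 1.
Proof.
split.
  move=> y; case/andP: (chi_bnd M y) => h1 h2; apply/andP; split; lra.
apply: UC_lip => x y.
rewrite (_ : 1 - chi M x - (1 - chi M y) = chi M y - chi M x); last by ring.
by rewrite distrC chiL.
Qed.

Lemma tight (mu : probability R R) e : 0 < e ->
  exists M, 0 < M /\ Ex mu (fun y => 1 - chi M y) < e.
Proof.
move=> e0.
pose A n := [set y : R | (n.+1%:R : R) < `|y|].
have mA n : measurable (A n).
  rewrite (_ : A n = setT `&` (fun y : R => `|y|) @^-1` `]n.+1%:R, +oo[%classic).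
    by apply: normr_measurable => //; exact: measurable_itv.
  apply/seteqP; split => y /=.
  - by move=> h; split => //; rewrite /= in_itv /= andbT.
  - by case=> _; rewrite /= in_itv /= andbT.
have capA : \bigcap_n A n = set0.
  apply/seteqP; split=> // y /= Hy.
  have := Hy (Num.truncn `|y|) I; rewrite /A /=.
  by move/(lt_trans (truncnS_gt _)); rewrite ltxx.
have ndA : nonincreasing_seq A.
  move=> n m nm; apply/subsetPset => y; rewrite /A /=; apply: le_lt_trans.
  by rewrite ler_nat.
have cvA : (mu \o A) @ \oo --> mu (\bigcap_n A n).
  apply: nonincreasing_cvg_mu => //.
  - exact: (le_lt_trans (probability_le1 mu (mA 0%N)) (ltry 1)).
  - by rewrite capA.
rewrite capA measure0 in cvA.
have /fine_cvgP [_ h] := cvA.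
have /cvgrPdist_lt /(_ e e0) [N _ HN] := h.
have := HN N (leqnn N); rewrite /= sub0r normrN => hN.
exists N.+1%:R; split; first by rewrite ltr0Sn.
have m1 : measurable_fun setT (fun y => 1 - chi N.+1%:R y) := good_meas (good_1chi _).
have b1 := (good_1chi N.+1%:R).1.
have mi : measurable_fun setT (\1_(A N) : R -> R) by exact/measurable_indicP.
have bi : forall y : R, 0 <= (\1_(A N) : R -> R) y <= 1.
  by move=> y; rewrite indicE; case: (y \in A N) => /=; rewrite ?lexx ?ler01.
apply: (le_lt_trans _ (le_lt_trans (ler_norm _) hN)).
have -> : fine (mu (A N)) = Ex mu (\1_(A N)).
  by rewrite /Ex integral_indic // setIT.
apply: (Ex_le mu m1 mi b1 bi) => y.
rewrite indicE; have [hy|hy] := boolP (y \in A N).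
  by case/andP: (chi_bnd N.+1%:R y) => ? ?; rewrite /=; lra.
rewrite chi1 ?subrr //.
move: hy; rewrite notin_setE /A /= => /negP; rewrite -leNgt => hy.
by apply: (le_trans hy); rewrite ler_nat.
Qed.

End WCs.

Section WCconv.
Context (R : realType).

Lemma tightseq (mu_ : nat -> probability R R) mu e : WC mu_ mu -> 0 < e ->
  exists M, 0 < M /\ exists N, forall k, (N <= k)%N ->
    Ex (mu_ k) (fun y => 1 - chi M y) < e.
Proof.
move=> W e0; have e20 : 0 < e / 2 by rewrite divr_gt0.
have [M [M0 hM]] := tight mu e20.
have [N HN] := W _ _ (good_1chi M) _ e20.
exists M; split => //; exists N => k /HN.
by rewrite ltr_norml => /andP[h1 h2]; lra.
Qed.

Lemma good_shift (F : R -> R) C (y : R) : good F C -> good (fun z => F (y + z)) C.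
Proof.
move=> gF; have := good_lin y (gF) (a := 1); rewrite normr1 lexx => /(_ isT).
by have -> : (fun z => F (1 * z + y)) = (fun z => F (y + z)) by apply/funext => z; congr F; ring.
Qed.

Lemma G_equi (F : R -> R) C : good F C -> forall e, 0 < e ->
  exists2 dl, 0 < dl & forall (rho : probability R R) x x', `|x - x'| < dl ->
    `|Ex rho (fun z => F (x + z)) - Ex rho (fun z => F (x' + z))| < e.
Proof.
move=> gF e e0; have e20 : 0 < e / 2 by rewrite divr_gt0.
have [dl dl0 H] := gF.2 _ e20; exists dl => // rho x x' hx.
have g1 := good_shift x gF; have g2 := good_shift x' gF.
have hb : forall z : R, 0 <= (fun _ => e / 2) z <= e / 2 by move=> z; rewrite lexx ltW.
apply: (le_lt_trans (Ex_dist rho (good_meas g1) (good_meas g2) (measurable_cst _) g1.1 g2.1 hb _)).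
  move=> z; apply: ltW; apply: H.
  by rewrite (_ : x + z - (x' + z) = x - x'); last by ring.
by rewrite Ex_cst ltr_pdivrMr // ltr_pMr // ltr1n.
Qed.

Lemma G_good (rho : probability R R) (F : R -> R) C : good F C ->
  good (fun y => Ex rho (fun z => F (y + z))) C.
Proof.
move=> gF; split.
  by move=> y; have g1 := good_shift y gF; exact: (int_fin rho (good_meas g1) g1.1).2.
move=> e e0; have [dl dl0 H] := G_equi gF e0; exists dl => // x x'; exact: H.
Qed.

Lemma unif_conv (rho_ : nat -> probability R R) rho (F : R -> R) C (K0 : R) e :
  WC rho_ rho -> good F C -> 0 < e ->
  exists N, forall k, (N <= k)%N -> forall y, `|y| <= K0 ->
    `|Ex (rho_ k) (fun z => F (y + z)) - Ex rho (fun z => F (y + z))| < e.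
Proof.
move=> W gF e0.
have e30 : 0 < e / 3 by rewrite divr_gt0.
pose K := [set` `[- K0, K0]].
have cov := (compact_near_coveringP K).1 (@segment_compact _ _ _).
have := @cov nat \oo (fun k y => `|Ex (rho_ k) (fun z => F (y + z)) - Ex rho (fun z => F (y + z))| < e) _.
case.
- move=> x Kx.
  have [dl dl0 Hdl] := G_equi gF e30.
  have [Nx HNx] := W _ _ (good_shift x gF) _ e30.
  near=> x' k => /=.
  have hx' : `|x - x'| < dl.
    near: x'; apply/nbhs_ballP; exists dl => // z; rewrite /ball /=.
  have hk : (Nx <= k)%N by near: k; exists Nx => // k.
  have a1 := Hdl (rho_ k) _ _ hx'.
  have a2 := Hdl rho _ _ hx'.
  have a3 := HNx _ hk.
  move: a1 a2 a3.
  set u := Ex (rho_ k) _; set v := Ex (rho_ k) _; set w := Ex rho _; set t := Ex rho _.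
  rewrite !ltr_norml => /andP[? ?] /andP[? ?] /andP[? ?]; apply/andP; split; lra.
- move=> N _ HN; exists N => k hk y hy.
  apply: (HN k hk); rewrite /K /= in_itv /= -ler_norml //.
Unshelve. all: by end_near. Qed.

End WCconv.

Section WCconv2.
Context (R : realType).

Lemma WC_conv (mu_ rho_ : nat -> probability R R) mu rho :
  WC mu_ mu -> WC rho_ rho -> WC (fun k => conv (mu_ k) (rho_ k)) (conv mu rho).
Proof.
move=> Wmu Wrho F C gF e e0.
have C0 : 0 <= C := good_ge0C gF.
have mF := good_meas gF.
rewrite /=.
have E1 k : Ex (conv (mu_ k) (rho_ k)) F =
    Ex (mu_ k) (fun y => Ex (rho_ k) (fun z => F (y + z))).
  exact: (integral_conv _ _ mF gF.1).
have E2 : Ex (conv mu rho) F = Ex mu (fun y => Ex rho (fun z => F (y + z))).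
  exact: (integral_conv _ _ mF gF.1).
have e4 : 0 < e / 4 by rewrite divr_gt0.
have eC : 0 < e / (4 * (C + 1)) by rewrite divr_gt0 //; lra.
have [M [M0 [N1 HN1]]] := tightseq Wmu eC.
have [N2 HN2] := unif_conv (M + 1) Wrho gF e4.
have gG := G_good rho gF.
have [N3 HN3] := Wmu _ _ gG _ e4.
exists (maxn N1 (maxn N2 N3)) => k hk.
rewrite E1 E2.
have hk1 : (N1 <= k)%N by move: hk; rewrite !geq_max => /andP[].
have hk2 : (N2 <= k)%N by move: hk; rewrite !geq_max => /and3P[].
have hk3 : (N3 <= k)%N by move: hk; rewrite !geq_max => /and3P[].
set Gk := fun y => Ex (rho_ k) (fun z => F (y + z)).
set G := fun y => Ex rho (fun z => F (y + z)).
have gGk : good Gk C := G_good (rho_ k) gF.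
pose h := fun y => e / 4 + C * (1 - chi M y).
have mchi : measurable_fun setT (fun y => 1 - chi M y) := good_meas (good_1chi M).
have mCchi : measurable_fun setT (fun y => C * (1 - chi M y)).
  exact: measurable_funM.
have mh : measurable_fun setT h by exact: measurable_funD.
have hb1 : forall y, 0 <= C * (1 - chi M y) <= C * 1.
  move=> y; case/andP: ((good_1chi M).1 y) => a b.
  by rewrite mulr_ge0 //= ler_wpM2l.
have hb : forall y, 0 <= h y <= e / 4 + C * 1.
  move=> y; case/andP: (hb1 y) => a b; rewrite /h; apply/andP; split; lra.
have Eh : Ex (mu_ k) h = e / 4 + C * Ex (mu_ k) (fun y => 1 - chi M y).
  rewrite /h (Ex_add (mu_ k) (measurable_cst _) mCchi (C := e / 4) (D := C * 1)) //; last first.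
    by move=> y; rewrite lexx ltW.
  by rewrite Ex_cst (Ex_scale (mu_ k) mchi (good_1chi M).1 C0).
have d1 : `|Ex (mu_ k) Gk - Ex (mu_ k) G| <= Ex (mu_ k) h.
  apply: (Ex_dist (mu_ k) (good_meas gGk) (good_meas gG) mh gGk.1 gG.1 hb) => y.
  have [hy|hy] := lerP `|y| (M + 1).
    apply: ltW; apply: (lt_le_trans (HN2 k hk2 y hy)).
    by rewrite /h lerDl; case/andP: (hb1 y).
  rewrite /h chi0; last exact: ltW.
  case/andP: (gGk.1 y) => a b; case/andP: (gG.1 y) => c d.
  rewrite subr0 mulr1 ler_norml; apply/andP; split; lra.
have d2 := HN3 k hk3.
have t1 := HN1 k hk1.
have t0 : 0 <= Ex (mu_ k) (fun y => 1 - chi M y).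
  exact: (Ex_ge0 (mu_ k) mchi (good_1chi M).1).
have t2 : C * Ex (mu_ k) (fun y => 1 - chi M y) <= e / 4.
  apply: (le_trans (ler_wpM2l C0 (ltW t1))).
  rewrite (_ : C * (e / (4 * (C + 1))) = (e / 4) * (C / (C + 1))); last by field; lra.
  rewrite -[leRHS]mulr1 ler_wpM2l //; first exact: ltW.
  by rewrite ler_pdivrMr ?mul1r; lra.
move: d1 d2; rewrite Eh; set a := Ex (mu_ k) Gk; set b := Ex (mu_ k) G; set c := Ex mu G.
rewrite ler_norml ltr_norml => /andP[? ?] /andP[? ?].
rewrite ltr_norml; apply/andP; split; lra.
Qed.

End WCconv2.

Section Vague.
Context (R : realType).

Lemma WC_cpow (rho_ : nat -> probability R R) (rho : probability R R) n :
  WC rho_ rho -> WC (fun k => cpow (rho_ k) n) (cpow rho n).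
Proof.
move=> W; elim: n => [|n IH]; first exact: WC_cst.
exact: WC_conv.
Qed.

Lemma ecv_cv (mu_ : nat -> probability R R) (mu : probability R R) (f : R -> R) C :
  measurable_fun setT f -> (forall x, 0 <= f x <= C) ->
  (fun k => \int[mu_ k]_y (f y)%:E)%E @ \oo --> (\int[mu]_y (f y)%:E)%E ->
  cv (fun k => Ex (mu_ k) f) (Ex mu f).
Proof.
move=> mf fb h.
have h' : (fun k => (Ex (mu_ k) f)%:E) @ \oo --> (Ex mu f)%:E.
  rewrite -(int_fin mu mf fb).1.
  by under eq_fun do rewrite -(int_fin _ mf fb).1.
have /fine_cvgP [_ h2] := h'.
move=> e e0; have /cvgrPdist_lt /(_ e e0) [N _ HN] := h2.
by exists N => k /HN /=; rewrite distrC.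
Qed.

Lemma Ex_compl (mu : probability R R) (g : R -> R) : measurable_fun setT g ->
  (forall x, 0 <= g x <= 1) -> Ex mu (fun y => 1 - g y) = 1 - Ex mu g.
Proof.
move=> mg gb.
have b2 : forall x, 0 <= 1 - g x <= 1.
  by move=> x; case/andP: (gb x) => a b; apply/andP; split; lra.
have m2 : measurable_fun setT (fun y => 1 - g y).
  by apply: measurable_funB.
have := Ex_add mu mg m2 gb b2.
have -> : (fun x => g x + (1 - g x)) = (fun _ => 1) by apply/funext => x /=; ring.
by rewrite Ex_cst => h; lra.
Qed.

Lemma chi_test (M : R) : test_fun (chi M).
Proof.
split; first exact/UC_cont/UC_chi.
by exists (M + 1) => y hy; rewrite chi0 //; exact: ltW.
Qed.

Lemma vague_WC (rho_ : nat -> probability R R) (rho : probability R R) :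
  vague_cvg (fun k => rho_ k : set R -> \bar R) rho -> WC rho_ rho.
Proof.
move=> V F C gF e e0.
have C0 : 0 <= C := good_ge0C gF.
have e4 : 0 < e / 4 by rewrite divr_gt0.
have eC : 0 < e / (4 * (C + 1)) by rewrite divr_gt0 //; lra.
have [M [M0 hM]] := tight rho eC.
have mchi : measurable_fun setT (chi M) := good_meas (conj (chi_bnd M) (UC_chi M)).
have cvchi := ecv_cv mchi (chi_bnd M) (V _ (chi_test M)).
pose Fc := fun y => F y * chi M y.
have gFc : good Fc (C * 1) := good_mul gF (conj (chi_bnd M) (UC_chi M)).
have tFc : test_fun Fc.
  split; first exact/UC_cont/gFc.2.
  by exists (M + 1) => y hy; rewrite /Fc chi0 ?mulr0 //; exact: ltW.
have cvFc := ecv_cv (good_meas gFc) gFc.1 (V _ tFc).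
pose Fr := fun y => F y * (1 - chi M y).
have gFr : good Fr (C * 1) := good_mul gF (good_1chi M).
have FE : F = fun y => Fc y + Fr y.
  by apply/funext => y; rewrite /Fc /Fr; ring.
have mF := good_meas gF.
have Ecr (mu : probability R R) : Ex mu Fr <= C * (1 - Ex mu (chi M)).
  rewrite -(Ex_compl mu mchi (chi_bnd M)).
  rewrite -(Ex_scale mu (good_meas (good_1chi M)) (good_1chi M).1 C0).
  apply: (Ex_le mu (good_meas gFr) _ gFr.1 (C := C * 1) (D := C * 1)).
  - by apply: measurable_funM => //; exact: good_meas (good_1chi M).
  - move=> y; case/andP: ((good_1chi M).1 y) => a b.
    by rewrite mulr_ge0 //= ler_wpM2l.
  - move=> y; rewrite /Fr ler_wpM2r //; first by case/andP: ((good_1chi M).1 y).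
    by case/andP: (gF.1 y).
have Ege (mu : probability R R) : 0 <= Ex mu Fr := Ex_ge0 mu (good_meas gFr) gFr.1.
have Esplit (mu : probability R R) : Ex mu F = Ex mu Fc + Ex mu Fr.
  by rewrite {1}FE (Ex_add mu (good_meas gFc) (good_meas gFr) gFc.1 gFr.1).
have hM' : 1 - Ex rho (chi M) < e / (4 * (C + 1)).
  by rewrite -(Ex_compl rho mchi (chi_bnd M)).
have [N1 HN1] := cvchi _ eC.
have [N2 HN2] := cvFc _ e4.
exists (maxn N1 N2) => k hk.
have hk1 : (N1 <= k)%N by move: hk; rewrite geq_max => /andP[].
have hk2 : (N2 <= k)%N by move: hk; rewrite geq_max => /andP[].
have a1 := HN1 k hk1; have a2 := HN2 k hk2.
have b1 := Ecr (rho_ k); have b2 := Ecr rho.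
have c1 := Ege (rho_ k); have c2 := Ege rho.
rewrite /= !Esplit.
have kC : C * (e / (4 * (C + 1))) <= e / 4.
  rewrite (_ : C * (e / (4 * (C + 1))) = (e / 4) * (C / (C + 1))); last by field; lra.
  rewrite -[leRHS]mulr1 ler_wpM2l //; first exact: ltW.
  by rewrite ler_pdivrMr ?mul1r; lra.
move: a1 a2 b1 b2 c1 c2 hM' kC.
set x1 := Ex (rho_ k) (chi M); set x2 := Ex rho (chi M).
set y1 := Ex (rho_ k) Fc; set y2 := Ex rho Fc.
set z1 := Ex (rho_ k) Fr; set z2 := Ex rho Fr.
set q := e / (4 * (C + 1)).
rewrite !ltr_norml => /andP[? ?] /andP[? ?] ? ? ? ? ? ?.
have : C * (1 - x1) <= C * q + C * q.
  rewrite -mulrDr ler_wpM2l //; lra.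
move=> ?.
have : C * (1 - x2) <= C * q.
  rewrite ler_wpM2l //; lra.
move=> ?.
apply/andP; split; lra.
Qed.

End Vague.

Section Tannery.
Context (R : realType).
Local Open Scope ereal_scope.

Lemma ev_all (P : nat -> nat -> Prop) N :
  (forall n, (n < N)%N -> exists K, forall k, (K <= k)%N -> P n k) ->
  exists K, forall k, (K <= k)%N -> forall n, (n < N)%N -> P n k.
Proof.
elim: N => [|N IH] H; first by exists 0%N => k _ n.
have [K1 HK1] := IH (fun n hn => H n (ltnW hn)).
have [K2 HK2] := H N (ltnSn N).
exists (maxn K1 K2) => k; rewrite geq_max => /andP[h1 h2] n.
rewrite ltnS leq_eqVlt => /orP[/eqP ->|hn]; first exact: HK2.
exact: HK1.
Qed.

Lemma cv_cvg (u : nat -> R) l : cv u l -> (u @ \oo --> l)%R.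
Proof.
move=> h; apply/cvgrPdist_lt => e e0; have [N HN] := h e e0.
by exists N => // k /HN; rewrite distrC.
Qed.

Variables (p : nat -> R) (C : R).
Hypothesis p0 : forall n, (0 <= p n)%R.
Hypothesis psum : \sum_(0 <= n <oo) (p n)%:E < +oo.
Hypothesis C0 : (0 <= C)%R.

Definition bndseq (c : nat -> R) := forall n, (0 <= c n <= C)%R.

Let term_ge0 c : bndseq c -> forall n, 0 <= (p n)%:E * (c n)%:E.
Proof. by move=> cb n; rewrite -EFinM lee_fin mulr_ge0 //; case/andP: (cb n). Qed.

Let tailp_le N : \sum_(N <= n <oo) (p n)%:E <= \sum_(0 <= n <oo) (p n)%:E.
Proof.
rewrite (nneseries_split 0 N); last by move=> k _; rewrite lee_fin p0.
by rewrite add0n; apply: leeDr; apply: sume_ge0 => k _; rewrite lee_fin p0.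
Qed.

Let tailp_fin N : \sum_(N <= n <oo) (p n)%:E \is a fin_num.
Proof.
rewrite ge0_fin_numE; first exact: le_lt_trans (tailp_le N) psum.
by apply: nneseries_ge0 => k _ _; rewrite lee_fin p0.
Qed.

Let tail_bnd c N : bndseq c ->
  0 <= \sum_(N <= n <oo) ((p n)%:E * (c n)%:E) <= C%:E * \sum_(N <= n <oo) (p n)%:E.
Proof.
move=> cb; apply/andP; split.
  by apply: nneseries_ge0 => k _ _; exact: term_ge0.
rewrite -nneseriesZl; last by move=> k _; rewrite lee_fin p0.
apply: lee_nneseries => [k _ _|n _]; first exact: term_ge0.
by rewrite -!EFinM lee_fin mulrC; apply: ler_wpM2r; [exact: p0 | case/andP: (cb n)].
Qed.

Let tail_fin c N : bndseq c -> \sum_(N <= n <oo) ((p n)%:E * (c n)%:E) \is a fin_num.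
Proof.
move=> cb; have /andP[a b] := tail_bnd N cb.
rewrite ge0_fin_numE //; apply: le_lt_trans b _.
by rewrite -(fineK (tailp_fin N)) -EFinM ltry.
Qed.

Let S_split c N : bndseq c ->
  fine (\sum_(0 <= n <oo) ((p n)%:E * (c n)%:E)) =
  (\sum_(0 <= n < N) (p n * c n) + fine (\sum_(N <= n <oo) ((p n)%:E * (c n)%:E)))%R.
Proof.
move=> cb; rewrite (nneseries_split 0 N); last by move=> k _; exact: term_ge0.
rewrite add0n.
have -> : \sum_(0 <= k < N) ((p k)%:E * (c k)%:E) = (\sum_(0 <= k < N) (p k * c k))%:E.
  by rewrite -sumEFin; apply: eq_bigr => k _; rewrite EFinM.
by rewrite fineD // tail_fin.
Qed.

Lemma S_fin c : bndseq c -> \sum_(0 <= n <oo) ((p n)%:E * (c n)%:E) \is a fin_num.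
Proof. exact: tail_fin. Qed.

Lemma tannery (a : nat -> nat -> R) (b : nat -> R) :
  (forall k, bndseq (fun n => a n k)) -> bndseq b -> (forall n, cv (a n) (b n)) ->
  (fun k => \sum_(0 <= n <oo) ((p n)%:E * (a n k)%:E)) @ \oo -->
    \sum_(0 <= n <oo) ((p n)%:E * (b n)%:E).
Proof.
move=> ab bb cab.
rewrite -(fineK (S_fin bb)).
apply: cvg_EFin; first by apply: nearW => k; exact: S_fin.
apply: cv_cvg => e e0.
have e4 : (0 < e / 4)%R by rewrite divr_gt0.
have hC1 : (0 < 4 * (C + 1))%R by apply: mulr_gt0 => //; apply: ltr_pwDr.
have eC : (0 < e / (4 * (C + 1)))%R by rewrite divr_gt0.
have tcv := nneseries_tail_cvg psum (fun k _ => ltac:(by rewrite lee_fin p0)).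
have /fine_cvgP [_ tcv'] := tcv.
have /cvgrPdist_lt /(_ _ eC) [N _ HN] := tcv'.
have tN : (fine (\sum_(N <= n <oo) (p n)%:E) < e / (4 * (C + 1)))%R.
  by have := HN N (leqnn N); rewrite /= sub0r normrN; apply: le_lt_trans; exact: ler_norm.
have tN0 : (0 <= fine (\sum_(N <= n <oo) (p n)%:E))%R.
  by apply: fine_ge0; apply: nneseries_ge0 => k _ _; rewrite lee_fin p0.
set P := (\sum_(0 <= n < N) p n)%R.
have P0 : (0 <= P)%R by apply: sumr_ge0 => k _.
have eP : (0 < e / (2 * (P + 1)))%R by rewrite divr_gt0 //; lra.
have [K HK] := @ev_all (fun n k => `|a n k - b n| < e / (2 * (P + 1)))%R N (fun n _ => cab n _ eP).
exists K => k hk.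
rewrite /= (S_split N (ab k)) (S_split N bb).
have tb c : bndseq c -> (0 <= fine (\sum_(N <= n <oo) ((p n)%:E * (c n)%:E)) <= C * fine (\sum_(N <= n <oo) (p n)%:E))%R.
  move=> cb; have /andP[u v] := tail_bnd N cb.
  rewrite fine_ge0 //= -lee_fin fineK ?tail_fin // EFinM fineK //.
have t1 := tb _ (ab k); have t2 := tb _ bb.
have fs : (`|\sum_(0 <= n < N) (p n * a n k) - \sum_(0 <= n < N) (p n * b n)| <= e / 2 * (P / (P + 1)))%R.
  rewrite -sumrB.
  apply: (le_trans (ler_norm_sum _ _ _)).
  rewrite (_ : e / 2 * (P / (P + 1)) = \sum_(0 <= n < N) (p n * (e / (2 * (P + 1)))))%R; last first.
    by rewrite -mulr_suml -/P; field; lra.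
  apply: ler_sum_nat => n /andP[_ hn]; rewrite -mulrBr normrM ger0_norm // ler_wpM2l //.
  by apply: ltW; apply: HK.
have kP : (e / 2 * (P / (P + 1)) <= e / 2)%R.
  rewrite -[leRHS]mulr1 ler_wpM2l //; first by apply: ltW; rewrite divr_gt0.
  by rewrite ler_pdivrMr ?mul1r; lra.
have kC : (C * fine (\sum_(N <= n <oo) (p n)%:E) <= e / 4)%R.
  apply: (le_trans (ler_wpM2l C0 (ltW tN))).
  rewrite (_ : C * (e / (4 * (C + 1))) = (e / 4) * (C / (C + 1)))%R; last by field; lra.
  rewrite -[leRHS]mulr1 ler_wpM2l //; first exact: ltW.
  by rewrite ler_pdivrMr ?mul1r; lra.
move: fs t1 t2 kP kC.
set A1 := (\sum_(0 <= n < N) _)%R; set A2 := (\sum_(0 <= n < N) _)%R.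
set T1 := fine _; set T2 := fine _; set Q := fine _.
rewrite ler_norml => /andP[? ?] /andP[? ?] /andP[? ?] ? ?.
rewrite ltr_norml; apply/andP; split; lra.
Qed.

End Tannery.

Section Final.
Context (R : realType).

Lemma convpowE (rho : probability R R) n : convpow rho n = cpow rho n.
Proof. by elim: n => //= n ->. Qed.

Lemma mhdiv k : measurable_fun setT (@hdiv R k).
Proof. by apply: measurable_funM => //. Qed.

HB.instance Definition _ k := isMeasurableFun.Build _ _ _ _ (@hdiv R k) (mhdiv k).

Lemma poissonP_ge0 (lam : R) n : 0 < lam -> 0 <= poissonP lam n.
Proof.
move=> l0; rewrite /poissonP mulr_ge0 // ?invr_ge0 // ?mulr_ge0 // ?expR_ge0 //.
by rewrite exprn_ge0 // ltW.
Qed.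

Lemma psum_fin (lam : R) : 0 < lam -> (\sum_(0 <= n <oo) (poissonP lam n)%:E < +oo)%E.
Proof.
move=> l0.
set l := expR lam.
have hl : series (exp_coeff lam) @ \oo --> l := is_cvg_series_exp_coeff lam.
have -> : (\sum_(0 <= n <oo) (poissonP lam n)%:E = (expR (- lam) * l)%:E)%E.
  have -> : (\sum_(0 <= n <oo) (poissonP lam n)%:E =
      \sum_(0 <= n <oo) ((expR (- lam) * exp_coeff lam n)%:E))%E.
    by apply: eq_eseriesr => n _; rewrite /poissonP /exp_coeff /= mulrA.
  apply: cvg_lim => //.
  have -> : (fun n => \sum_(0 <= k < n) ((expR (- lam) * exp_coeff lam k)%:E))%E =
      (fun n => ((expR (- lam)) * series (exp_coeff lam) n)%:E).
    apply/funext => n; rewrite sumEFin -mulr_sumr; congr EFin.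
  apply: cvg_EFin; first by apply: nearW.
  exact: cvgMr.
by rewrite ltry.
Qed.

Definition pnn (lam : R) (hl : 0 < lam) n : {nonneg R} := NngNum (poissonP_ge0 n hl).

Lemma good_hdiv (F : R -> R) C k : good F C -> good (fun y => F (hdiv k.+1 y)) C.
Proof.
move=> gF; have := @good_lin R F C (k.+1%:R)^-1 0 gF.
have -> : (fun y => F ((k.+1%:R)^-1 * y + 0)) = (fun y => F (hdiv k.+1 y)).
  by apply/funext => y; rewrite /hdiv addr0 mulrC.
apply; rewrite ger0_norm ?invr_ge0 ?ler0n //.
by rewrite invf_le1 ?ltr0n ?ler1n.
Qed.

Lemma int_SigmaX (lam : R) (hl : 0 < lam) x (rho : probability R R) (F : R -> R) C :
  good F C ->
  (\int[SigmaX lam x rho]_y (F y)%:E = \sum_(0 <= n <oo) ((poissonP lam n)%:E *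
     (Ex (conv (@dirac _ R x R) (cpow rho n)) (fun y => F (hdiv n.+1 y)))%:E))%E.
Proof.
move=> gF.
pose nu n : probability R R := distribution (conv (@dirac _ R x R) (cpow rho n)) (@hdiv R n.+1).
have E : SigmaX lam x rho = mseries (fun n => mscale (pnn hl n) (nu n)) 0.
  apply/funext => A; rewrite /SigmaX /mseries.
  by apply: eq_eseriesr => n _; rewrite convpowE.
have mF := good_meas gF.
rewrite E ge0_integral_measure_series //; last first.
  - exact/measurable_EFinP.
  - by move=> y _; rewrite lee_fin; case/andP: (gF.1 y).
apply: eq_eseriesr => n _.
rewrite ge0_integral_mscale //; last first.
  - by move=> y _; rewrite lee_fin; case/andP: (gF.1 y).
  - exact/measurable_EFinP.
congr (_ * _)%E.
have gh := good_hdiv n gF.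
rewrite /nu /distribution ge0_integral_pushforward //; first last.
  all: try (by move=> y _; rewrite lee_fin; case/andP: (gF.1 y)).
  all: try (exact/measurable_EFinP).
  all: try (exact: mhdiv).
rewrite preimage_setT.
exact: (int_fin _ (good_meas gh) gh.1).1.
Qed.

Lemma int_Sigma (lam : R) (hl : 0 < lam) (rho : probability R R) (F : R -> R) C :
  good F C ->
  (\int[Sigma lam rho]_y (F y)%:E = \sum_(0 <= n <oo) ((poissonP lam n)%:E *
     (Ex (cpow rho n.+1) (fun y => F (hdiv n.+1 y)))%:E))%E.
Proof.
move=> gF.
pose nu n : probability R R := distribution (cpow rho n.+1) (@hdiv R n.+1).
have E : Sigma lam rho = mseries (fun n => mscale (pnn hl n) (nu n)) 0.
  apply/funext => A; rewrite /Sigma /mseries.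
  by apply: eq_eseriesr => n _; rewrite convpowE.
have mF := good_meas gF.
rewrite E ge0_integral_measure_series //; last first.
  - exact/measurable_EFinP.
  - by move=> y _; rewrite lee_fin; case/andP: (gF.1 y).
apply: eq_eseriesr => n _.
rewrite ge0_integral_mscale //; last first.
  - by move=> y _; rewrite lee_fin; case/andP: (gF.1 y).
  - exact/measurable_EFinP.
congr (_ * _)%E.
have gh := good_hdiv n gF.
rewrite /nu /distribution ge0_integral_pushforward //; first last.
  all: try (by move=> y _; rewrite lee_fin; case/andP: (gF.1 y)).
  all: try (exact/measurable_EFinP).
  all: try (exact: mhdiv).
rewrite preimage_setT.
exact: (int_fin _ (good_meas gh) gh.1).1.
Qed.

Lemma int_split (mu : set R -> \bar R) (phi : R -> R) :
  (exists m : {measure set R -> \bar R}, mu = m) ->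
  (\int[mu]_y (phi y)%:E = \int[mu]_y (posp phi y)%:E - \int[mu]_y (posp (fun z => - phi z) y)%:E)%E.
Proof.
case=> m ->.
rewrite (integralE m); congr (_ - _)%E; apply: eq_integral => y _.
  by rewrite funeposE /posp EFin_max.
by rewrite funenegE /posp EFin_max EFinN.
Qed.

Lemma final_step (Sig : (set R -> \bar R) -> set R -> \bar R) (lam : R) (hl : 0 < lam)
  (nu : probability R R -> nat -> probability R R) :
  (forall (rho : probability R R) F C, good F C ->
     (\int[Sig rho]_y (F y)%:E = \sum_(0 <= n <oo) ((poissonP lam n)%:E *
       (Ex (nu rho n) (fun y => F (hdiv n.+1 y)))%:E))%E) ->
  (forall rho_ rho, WC rho_ rho -> forall n, WC (fun k => nu (rho_ k) n) (nu rho n)) ->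
  (forall rho : probability R R, exists m : {measure set R -> \bar R}, Sig rho = m) ->
  continuous_on_P Sig.
Proof.
move=> Hint HW Hm rho_ rho _ _ V phi [cphi [M hM]].
have W := vague_WC V.
have part g C : good g C ->
    (fun k => \int[Sig (rho_ k)]_y (g y)%:E)%E @ \oo --> (\int[Sig rho]_y (g y)%:E)%E.
  move=> gg.
  rewrite (Hint rho g C gg).
  have -> : (fun k => \int[Sig (rho_ k)]_y (g y)%:E)%E = (fun k => \sum_(0 <= n <oo) ((poissonP lam n)%:E *
       (Ex (nu (rho_ k) n) (fun y => g (hdiv n.+1 y)))%:E))%E.
    by apply/funext => k; exact: (Hint (rho_ k) g C gg).
  apply: (@tannery R _ C (fun n => poissonP_ge0 n hl) (psum_fin hl) (good_ge0C gg)
    (fun n k => Ex (nu (rho_ k) n) (fun y => g (hdiv n.+1 y)))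
    (fun n => Ex (nu rho n) (fun y => g (hdiv n.+1 y)))).
  - move=> k n; have gh := good_hdiv n gg; exact: (int_fin _ (good_meas gh) gh.1).2.
  - move=> n; have gh := good_hdiv n gg; exact: (int_fin _ (good_meas gh) gh.1).2.
  - by move=> n; apply: (HW _ _ W n _ _ (good_hdiv n gg)).
have [C1 g1] := good_posp cphi hM.
have cphiN : continuous (fun z => - phi z).
  by move=> z; apply: continuousN; exact: cphi.
have hMN : forall y, M < `|y| -> - phi y = 0 by move=> y /hM ->; rewrite oppr0.
have [C2 g2] := good_posp cphiN hMN.
have p1 := part _ _ g1; have p2 := part _ _ g2.
have fin g C : good g C -> (\int[Sig rho]_y (g y)%:E)%E \is a fin_num.
  move=> gg; rewrite (Hint rho _ _ gg); apply: (S_fin (fun n => poissonP_ge0 n hl) (psum_fin hl)).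
  move=> n; have gh := good_hdiv n gg; exact: (int_fin _ (good_meas gh) gh.1).2.
have -> : (fun k => \int[Sig (rho_ k)]_y (phi y)%:E)%E = (fun k =>
    \int[Sig (rho_ k)]_y (posp phi y)%:E - \int[Sig (rho_ k)]_y (posp (fun z => - phi z) y)%:E)%E.
  by apply/funext => k; exact: int_split (Hm (rho_ k)).
rewrite (int_split _ (Hm rho)).
apply: cvgeB => //.
by rewrite fin_num_adde_defr // (fin _ _ g1).
Qed.

Lemma dirac_WC_cpow (x : R) (rho_ : nat -> probability R R) rho :
  WC rho_ rho -> forall n, WC (fun k => conv (@dirac _ R x R) (cpow (rho_ k) n))
    (conv (@dirac _ R x R) (cpow rho n)).
Proof. by move=> W n; apply: WC_conv; [exact: WC_cst | exact: WC_cpow]. Qed.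

Lemma Sigma_meas_ex (lam : R) (hl : 0 < lam) (rho : probability R R) :
  exists m : {measure set R -> \bar R}, Sigma lam rho = m.
Proof.
pose nu n : probability R R := distribution (cpow rho n.+1) (@hdiv R n.+1).
exists (mseries (fun n => mscale (pnn hl n) (nu n)) 0).
apply/funext => A; rewrite /Sigma /mseries /=.
by apply: eq_eseriesr => n _; rewrite convpowE.
Qed.

Lemma SigmaX_meas_ex (lam : R) (hl : 0 < lam) x (rho : probability R R) :
  exists m : {measure set R -> \bar R}, SigmaX lam x rho = m.
Proof.
pose nu n : probability R R := distribution (conv (@dirac _ R x R) (cpow rho n)) (@hdiv R n.+1).
exists (mseries (fun n => mscale (pnn hl n) (nu n)) 0).
apply/funext => A; rewrite /SigmaX /mseries /=.
by apply: eq_eseriesr => n _; rewrite convpowE.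
Qed.

Theorem theorem3_aux (lam : R) (hlam : 0 < lam) :
  (forall x : R, continuous_on_P (SigmaX lam x)) /\ continuous_on_P (Sigma lam).
Proof.
split.
  move=> x; apply: (@final_step _ lam hlam (fun rho n => conv (@dirac _ R x R) (cpow rho n))).
  - move=> rho F C gF; have := int_SigmaX hlam x rho gF. move=> ->. done.
  - by move=> rho_ rho W n; exact: dirac_WC_cpow.
  - by move=> rho; exact: SigmaX_meas_ex.
apply: (@final_step _ lam hlam (fun rho n => cpow rho n.+1)).
- move=> rho F C gF; have := int_Sigma hlam rho gF. move=> ->. done.
- by move=> rho_ rho W n; exact: WC_cpow.
- by move=> rho; exact: Sigma_meas_ex.
Qed.

End Final.

Unset Implicit Arguments.

Theorem theorem3 (R : realType) (lam : R) (hlam : 0 < lam) :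
  (forall x : R, continuous_on_P (SigmaX lam x)) /\ continuous_on_P (Sigma lam).
Proof. exact: (@theorem3_aux R lam hlam). Qed.
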